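(* Assume $\ker(K)\cap\ker(D)=\{0\}$ and fix $\delta\ge0$ and data $y^\delta$. Let $\{\Psi_k\}_{k\in\mathbb{N}}$ be a sequence of reconstructors and $\Psi^*$ a reconstructor such that $\sup_{y\in\mathcal{Y}^\delta}\|\Psi_k(y)-\Psi^*(y)\|_1\to0$ as $k\to\infty$, where $\mathcal{Y}^\delta=\{y\in\mathbb{R}^m:\inf_{x\in\mathcal{X}}\|Kx-y\|_2\le\delta\}$. For each $k$ let $x^*_{\Psi_k,\delta}$ be the unique minimizer over $\mathcal{X}$ of $\mathcal{J}_{\Psi_k,\delta}(x)=\|Kx-y^\delta\|_2^2+\lambda\|w(\Psi_k(y^\delta))\odot|Dx|\|_1$, and let $x^*_{\Psi^*,\delta}$ denote the unique minimizer over $\mathcal{X}$ of $\mathcal{J}_{\Psi^*,\delta}(x)=\|Kx-y^\delta\|_2^2+\lambda\|w(\Psi^*(y^\delta))\odot|Dx|\|_1$. Then $\{x^*_{\Psi_k,\delta}\}_{k\in\mathbb{N}}$ has a convergent subsequence whose limit is $x^*_{\Psi^*,\delta}$.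
   Context: Let $K\in\mathbb{R}^{m\times n}$ with $m\le n$, and let $D_h,D_v\in\mathbb{R}^{n\times n}$ be the discrete horizontal and vertical difference operators; $Dx=\begin{bmatrix}D_hx\\ D_vx\end{bmatrix}\in\mathbb{R}^{2n}$, and $|Dx|\in\mathbb{R}^n$, $(|Dx|)_i=\sqrt{(D_hx)_i^2+(D_vx)_i^2}$. $\mathcal{X}=\{x\in\mathbb{R}^n: x_i\ge 0\ \forall i\}$. Fix $\lambda>0$, $\eta>0$, $p\in(0,1)$, and for $\tilde x\in\mathbb{R}^n$ define $(w(\tilde{x}))_i=\big(\eta/\sqrt{\eta^2+(|D\tilde{x}|)_i^2}\big)^{1-p}$. A reconstructor is a Lipschitz continuous map $\Psi:\mathbb{R}^m\to\mathbb{R}^n$. The data is $y^\delta=Kx^{GT}+e$ with $x^{GT}\in\mathcal{X}$ and $\|e\|_2\le\delta$. $\odot$ is the entrywise product. *)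

(* Defs.v *)
From HB Require Import structures.
From mathcomp Require Import all_boot all_order all_algebra.
From mathcomp Require Import all_classical all_reals all_analysis.
Set Implicit Arguments. Unset Strict Implicit. Unset Printing Implicit Defensive.
Import Order.TTheory GRing.Theory Num.Theory.
Import numFieldNormedType.Exports.
Local Open Scope classical_set_scope.
Local Open Scope ring_scope.

Section Defs.
Variable R : realType.

Definition norm2 {k : nat} (v : 'cV[R]_k) : R := Num.sqrt (\sum_i (v i 0) ^+ 2).
Definition norm1 {k : nat} (v : 'cV[R]_k) : R := \sum_i `|v i 0|.

Definition Xset (n : nat) : set 'cV[R]_n := [set x | forall i, 0 <= x i 0].
Arguments Xset n : clear implicits.

(* |Dx| in R^n, with Dx = [D_h x ; D_v x] *)
Definition absD {n : nat} (Dh Dv : 'M[R]_n) (x : 'cV[R]_n) : 'cV[R]_n :=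
  \col_i Num.sqrt (((Dh *m x) i 0) ^+ 2 + ((Dv *m x) i 0) ^+ 2).

Definition weight {n : nat} (Dh Dv : 'M[R]_n) (eta p : R) (xt : 'cV[R]_n) : 'cV[R]_n :=
  \col_i ((eta / Num.sqrt (eta ^+ 2 + (absD Dh Dv xt i 0) ^+ 2)) `^ (1 - p)).

Definition Jfun {m n : nat} (K : 'M[R]_(m, n)) (Dh Dv : 'M[R]_n) (lam eta p : R)
  (Psi : 'cV[R]_m -> 'cV[R]_n) (y : 'cV[R]_m) (x : 'cV[R]_n) : R :=
  (norm2 (K *m x - y)) ^+ 2 +
  lam * norm1 (\col_i (weight Dh Dv eta p (Psi y) i 0 * absD Dh Dv x i 0)).

Definition reconstructor {m n : nat} (Psi : 'cV[R]_m -> 'cV[R]_n) : Prop :=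
  exists L : R, forall y1 y2, norm2 (Psi y1 - Psi y2) <= L * norm2 (y1 - y2).

Definition Ydelta {m n : nat} (K : 'M[R]_(m, n)) (delta : R) : set 'cV[R]_m :=
  [set y | inf [set norm2 (K *m x - y) | x in Xset n] <= delta].

Definition minimizer_on {n : nat} (f : 'cV[R]_n -> R) (x : 'cV[R]_n) : Prop :=
  Xset n x /\ forall z, Xset n z -> f x <= f z.

Definition unique_minimizer_on {n : nat} (f : 'cV[R]_n -> R) (x : 'cV[R]_n) : Prop :=
  minimizer_on f x /\ forall z, minimizer_on f z -> z = x.

End Defs.
Arguments Xset {R} n.

(* Main.v *)
Require Import Defs.
From HB Require Import structures.
From mathcomp Require Import all_boot all_order all_algebra.
From mathcomp Require Import all_classical all_reals all_analysis.
From mathcomp Require Import lra.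
Import Order.TTheory GRing.Theory Num.Theory.
Import numFieldNormedType.Exports.
Local Open Scope classical_set_scope.
Local Open Scope ring_scope.

Set Implicit Arguments. Unset Strict Implicit. Unset Printing Implicit Defensive.
Set Warnings "-notation-overridden,-ambiguous-paths,-notation-incompatible-prefix".
Section H.
Variable R : realType.

Lemma cvg_sumR (I : finType) (f : I -> nat -> R) (a : I -> R) :
  (forall i, f i k @[k --> \oo] --> a i) ->
  (\sum_i f i k) @[k --> \oo] --> \sum_i a i.
Proof.
move=> H; apply: cvg_big => //.
exact: add_continuous.
Qed.

Definition cvgc n (u : nat -> 'cV[R]_n) (v : 'cV[R]_n) :=
  forall i, (fun k => u k i 0) @ \oo --> v i 0.

Lemma cvgc_mul m n (M : 'M[R]_(m, n)) u v : cvgc u v ->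
  cvgc (fun k => M *m u k) (M *m v).
Proof.
move=> H i; rewrite mxE.
under eq_cvg do rewrite mxE.
apply: cvg_sumR => j.
apply: cvgMl_tmp; exact: H.
Qed.

Lemma sub_incr (psi : nat -> nat) : (forall k, (psi k < psi k.+1)%N) ->
  psi @ \oo --> \oo.
Proof.
move=> H.
have ge : forall k, (k <= psi k)%N.
  elim=> // k IH; exact: (leq_ltn_trans IH (H k)).
move=> P [N _ HN]; exists N => // k /= Nk; apply: HN => /=.
exact: (leq_trans Nk (ge k)).
Qed.

Lemma cvgc_sub n (u : nat -> 'cV[R]_n) v psi : (forall k, (psi k < psi k.+1)%N) ->
  cvgc u v -> cvgc (fun k => u (psi k)) v.
Proof.
move=> Hp H i; exact: (cvg_comp psi (fun k => u k i 0) (sub_incr Hp) (H i)).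
Qed.

Lemma cvgc_cvg n (u : nat -> 'cV[R]_n) v : cvgc u v -> u @ \oo --> v.
Proof.
move=> H; apply/cvg_mx_entourageP => A entA.
apply: filter_forall => i; apply: filter_forall => j.
rewrite (ord1 j).
have := H i; move/cvg_entourageP => /(_ A entA).
move=> HH.
have HH2 : \forall k \near \oo, A (v i 0, u k i 0) := HH.
suff : \forall k \near \oo, (v i 0, u k i 0) \in A by [].
near=> k; rewrite inE; exact: (near HH2 k).
Unshelve. all: by end_near.
Qed.


Lemma cvg_sqrtS (f : nat -> R) (a : R) : f @ \oo --> a ->
  (fun k => Num.sqrt (f k)) @ \oo --> Num.sqrt a.
Proof. move=> H; exact: (continuous_cvg _ (@sqrt_continuous R a) H). Qed.

Lemma cvg_powRS (f : nat -> R) (a r : R) : 0 < a -> f @ \oo --> a ->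
  (fun k => f k `^ r) @ \oo --> a `^ r.
Proof.
move=> a0 H.
have C : {for a, continuous (fun x : R => x `^ r)}.
  apply: differentiable_continuous; apply/derivable1_diffP.
  apply: derivable_powR; by rewrite in_itv /= a0.
exact: (continuous_cvg _ C H).
Qed.

Lemma cvg_sqr (f : nat -> R) (a : R) : f @ \oo --> a ->
  (fun k => f k ^+ 2) @ \oo --> a ^+ 2.
Proof. move=> H; under eq_cvg do rewrite expr2. rewrite expr2. exact: cvgM. Qed.

Variables (n : nat) (Dh Dv : 'M[R]_n) (eta p : R).

Lemma cvgc_absD u v : cvgc u v ->
  cvgc (fun k => absD Dh Dv (u k)) (absD Dh Dv v).
Proof.
move=> H i; rewrite mxE; under eq_cvg do rewrite mxE.
apply: cvg_sqrtS; apply: cvgD; apply: cvg_sqr; exact: cvgc_mul.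
Qed.

Lemma weight_gt0 v i : 0 < eta -> 0 < weight Dh Dv eta p v i 0.
Proof.
move=> e0; rewrite mxE; apply: powR_gt0; apply: divr_gt0 => //.
by rewrite sqrtr_gt0 ltr_wpDr ?sqr_ge0 ?exprn_gt0.
Qed.

Lemma cvgc_weight u v : 0 < eta -> cvgc u v ->
  cvgc (fun k => weight Dh Dv eta p (u k)) (weight Dh Dv eta p v).
Proof.
move=> e0 H i; rewrite mxE; under eq_cvg do rewrite mxE.
have s0 : 0 < Num.sqrt (eta ^+ 2 + absD Dh Dv v i 0 ^+ 2).
  by rewrite sqrtr_gt0 ltr_wpDr ?sqr_ge0 ?exprn_gt0.
apply: cvg_powRS; first exact: divr_gt0.
apply: cvgMl_tmp; apply: cvgV; first by rewrite gt_eqF.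
apply: cvg_sqrtS; apply: cvgD; first exact: cvg_cst.
apply: cvg_sqr; exact: cvgc_absD.
Qed.

End H.

Section H3.
Variable R : realType.

Lemma norm2_sq k (v : 'cV[R]_k) : norm2 v ^+ 2 = \sum_i v i 0 ^+ 2.
Proof. by rewrite /norm2 sqr_sqrtr // sumr_ge0 // => i _; exact: sqr_ge0. Qed.

Variables (m n : nat) (K : 'M[R]_(m, n)) (Dh Dv : 'M[R]_n) (lam : R) (y : 'cV[R]_m).

Definition Jw (w x : 'cV[R]_n) : R :=
  norm2 (K *m x - y) ^+ 2 + lam * norm1 (\col_i (w i 0 * absD Dh Dv x i 0)).

Lemma cvg_Jw ws w xs x : cvgc ws w -> cvgc xs x ->
  (fun k => Jw (ws k) (xs k)) @ \oo --> Jw w x.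
Proof.
move=> Hw Hx; rewrite /Jw norm2_sq; under eq_cvg do rewrite norm2_sq.
apply: cvgD.
  apply: cvg_sumR => i; apply: cvg_sqr.
  have E : forall z : 'cV[R]_m, (z - y) i 0 = z i 0 - y i 0 by move=> z; rewrite !mxE.
  rewrite E; under eq_cvg do rewrite E.
  apply: cvgB; [exact: cvgc_mul | exact: cvg_cst].
apply: cvgMl_tmp; apply: cvg_sumR => i; rewrite mxE; under eq_cvg do rewrite mxE.
apply: cvg_norm; apply: cvgM; [exact: Hw | exact: cvgc_absD].
Qed.

End H3.

Section H4.
Variable R : realType.

Lemma incr_lt (phi : nat -> nat) : (forall k, (phi k < phi k.+1)%N) ->
  forall a b, (a < b)%N -> (phi a < phi b)%N.
Proof.
move=> H a b; elim: b => // b IH; rewrite ltnS leq_eqVlt => /orP[/eqP->|/IH h].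
  exact: H.
exact: ltn_trans h (H b).
Qed.

Lemma bw_vec n (u : nat -> 'cV[R]_n) (M : R) : (forall k i, `|u k i 0| <= M) ->
  exists phi : nat -> nat, (forall k, (phi k < phi k.+1)%N) /\
    exists v, cvgc (fun k => u (phi k)) v.
Proof.
move=> HM.
suff [phi [Hphi Hc]] : exists phi : nat -> nat, (forall k, (phi k < phi k.+1)%N) /\
    forall i : 'I_n, cvgn (fun k => u (phi k) i 0).
  exists phi; split => //; exists (\col_i lim ((fun k => u (phi k) i 0) @ \oo)).
  by move=> i; rewrite mxE; exact: Hc.
suff H : forall j, exists phi : nat -> nat, (forall k, (phi k < phi k.+1)%N) /\
    forall i : 'I_n, (i < j)%N -> cvgn (fun k => u (phi k) i 0).
  have [phi [H1 H2]] := H n; exists phi; split => // i; exact: H2.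
elim=> [|j [phi [H1 H2]]].
  by exists id; split.
case: (ltnP j n) => jn; last first.
  exists phi; split => // i ij; apply: H2; exact: (leq_trans (ltn_ord i) jn).
pose i0 := Ordinal jn.
have bnd : bounded_fun (fun k => u (phi k) i0 0).
  exists M; split; first exact: num_real.
  move=> M' MM' k _ /=; exact: (le_trans (HM _ _) (ltW MM')).
have [f finc fcv] := bolzano_weierstrass bnd.
have finc' : forall k, (f k < f k.+1)%N.
  by move=> k; move/increasing_seqP: finc; apply.
exists (fun k => phi (f k)); split.
  by move=> k; apply: incr_lt.
move=> i; rewrite ltnS leq_eqVlt => /orP[/eqP ij|ij].
  have -> : i = i0 by apply: val_inj.
  exact: fcv.
have := H2 i ij => c.
apply: (cvgP (lim ((fun k => u (phi k) i 0) @ \oo))).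
exact: (cvg_comp f (fun k => u (phi k) i 0) (sub_incr finc') c).
Qed.

End H4.

Section H5.
Variable R : realType.

Lemma col_mx_bnd m1 m2 (a : 'cV[R]_m1) (b : 'cV[R]_m2) (M : R) :
  (forall i, `|a i 0| <= M) -> (forall i, `|b i 0| <= M) ->
  forall l, `|col_mx a b l 0| <= M.
Proof.
move=> Ha Hb l; rewrite -(fintype.splitK l); case: (fintype.split l) => i /=.
  by rewrite col_mxEu.
by rewrite col_mxEd.
Qed.

Lemma coerc m n (K : 'M[R]_(m, n)) (Dh Dv : 'M[R]_n) :
  (forall x : 'cV[R]_n, K *m x = 0 -> Dh *m x = 0 -> Dv *m x = 0 -> x = 0) ->
  exists C : R, 0 <= C /\ forall (x : 'cV[R]_n) (M1 : R), 0 <= M1 ->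
    (forall i, `|(K *m x) i 0| <= M1) -> (forall i, `|(Dh *m x) i 0| <= M1) ->
    (forall i, `|(Dv *m x) i 0| <= M1) -> forall j, `|x j 0| <= C * M1.
Proof.
move=> Hinj.
pose A := col_mx K (col_mx Dh Dv).
have Hfull : row_full A.
  rewrite /row_full -mxrank_tr -/(row_free A^T) -kermx_eq0.
  apply/eqP/row_matrixP => i; rewrite row0.
  set r := row i (kermx A^T).
  have r0 : r *m A^T = 0 by rewrite /r -row_mul mulmx_ker row0.
  have Ar : A *m r^T = 0 by rewrite -[A]trmxK -trmx_mul r0 trmx0.
  move: Ar; rewrite /A !mul_col_mx => /eqP; rewrite !col_mx_eq0 => /and3P[/eqP h1 /eqP h2 /eqP h3].
  by rewrite -[r]trmxK (Hinj _ h1 h2 h3) trmx0.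
have [B HB] := row_fullP Hfull.
exists (\sum_j \sum_l `|B j l|); split.
  by apply: sumr_ge0 => j _; apply: sumr_ge0 => l _.
move=> x M1 M10 H1 H2 H3 j.
have HA : forall l, `|(A *m x) l 0| <= M1.
  rewrite /A !mul_col_mx; apply: col_mx_bnd => //; exact: col_mx_bnd.
have -> : x = B *m (A *m x) by rewrite mulmxA HB mul1mx.
rewrite mxE; apply: le_trans (ler_norm_sum _ _ _) _.
rewrite mulr_suml.
apply: (@le_trans _ _ (\sum_l `|B j l| * M1)).
  apply: ler_sum => l _; rewrite normrM; apply: ler_wpM2l => //.
rewrite -!mulr_suml.
apply: ler_wpM2r => //.
rewrite (bigD1 j) //= lerDl; apply: sumr_ge0 => i _; apply: sumr_ge0 => l _ //.
Qed.

End H5.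

Section H6.
Variable R : realType.

Lemma norm1_ge k (v : 'cV[R]_k) i : `|v i 0| <= norm1 v.
Proof.
rewrite /norm1 (bigD1 i) //= lerDl; exact: sumr_ge0.
Qed.

Lemma sq_le_norm2 k (v : 'cV[R]_k) i : v i 0 ^+ 2 <= norm2 v ^+ 2.
Proof.
rewrite norm2_sq (bigD1 i) //= lerDl; apply: sumr_ge0 => j _; exact: sqr_ge0.
Qed.

Lemma norm2N k (v : 'cV[R]_k) : norm2 (- v) = norm2 v.
Proof. by rewrite /norm2; apply: congr1; apply: eq_bigr => i _; rewrite mxE sqrrN. Qed.

Lemma norm1_ge0 k (v : 'cV[R]_k) : 0 <= norm1 v.
Proof. exact: sumr_ge0. Qed.

Lemma abs_le_sq (t : R) : `|t| <= 1 + t ^+ 2.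
Proof. rewrite ler_norml; apply/andP; split; nra. Qed.

Lemma abs_le_absD n (Dh Dv : 'M[R]_n) x i :
  `|(Dh *m x) i 0| <= absD Dh Dv x i 0 /\ `|(Dv *m x) i 0| <= absD Dh Dv x i 0.
Proof.
have -> : absD Dh Dv x i 0 = Num.sqrt (((Dh *m x) i 0)^+2 + ((Dv *m x) i 0)^+2).
  by rewrite /absD !mxE.
split.
  rewrite -sqrtr_sqr; apply: ler_wsqrtr; rewrite lerDl sqr_ge0 //.
rewrite -sqrtr_sqr; apply: ler_wsqrtr; rewrite lerDr sqr_ge0 //.
Qed.

End H6.

Section Arith.
Variable R : realType.
Implicit Types a b t A B Y lam W w s q Ad h : R.

Lemma half_le a b : `|a - b| <= a / 2 -> a / 2 <= b.
Proof. rewrite ler_norml => /andP[h1 h2]; lra. Qed.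

Lemma le_addr_ge0 A B Y : A + B <= Y -> 0 <= B -> A <= Y.
Proof. move=> h1 h2; lra. Qed.

Lemma bnd_sum a b Y : `|a| <= 1 + a ^+ 2 -> `|b| <= 1 + b ^+ 2 ->
  a ^+ 2 <= Y -> b ^+ 2 <= Y -> `|a| + `|b| <= 2 + 2 * Y.
Proof. move=> h1 h2 h3 h4; lra. Qed.

Lemma twoY_ge0 Y : 0 <= Y -> 0 <= 2 * Y.
Proof. move=> h; lra. Qed.

Lemma key_bnd a lam W w s q Y : 0 < lam -> 0 < W -> 0 <= a -> W / 2 <= w ->
  w * a <= s -> q + lam * s <= Y -> 0 <= q -> a <= 2 * Y / (lam * W).
Proof.
move=> l0 W0 a0 h1 h2 h3 h4.
rewrite ler_pdivlMr; last exact: mulr_gt0.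
have d1 : 0 <= w - W / 2 by rewrite subr_ge0.
have d2 : 0 <= s - w * a by rewrite subr_ge0.
have := mulr_ge0 (mulr_ge0 (ltW l0) a0) d1.
have := mulr_ge0 (ltW l0) d2.
lra.
Qed.

Lemma M1_ge0 Y Ad : 0 <= Y -> 0 <= Ad -> 0 <= 2 + 2 * Y + Ad.
Proof. move=> h1 h2; lra. Qed.

Lemma M1_ge1 t Y Ad : t <= 2 + 2 * Y -> 0 <= Ad -> t <= 2 + 2 * Y + Ad.
Proof. move=> h1 h2; lra. Qed.

Lemma M1_ge2 h a Y Ad : h <= a -> a <= Ad -> 0 <= Y -> h <= 2 + 2 * Y + Ad.
Proof. move=> h1 h2 h3; lra. Qed.

End Arith.

Theorem theorem4 (R : realType) (m n : nat) (K : 'M[R]_(m, n)) (Dh Dv : 'M[R]_n)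
  (lam eta p delta : R) (xGT : 'cV[R]_n) (e y_delta : 'cV[R]_m)
  (Psi : nat -> 'cV[R]_m -> 'cV[R]_n) (PsiS : 'cV[R]_m -> 'cV[R]_n)
  (xk : nat -> 'cV[R]_n) (xS : 'cV[R]_n) :
  (m <= n)%N ->
  0 < lam -> 0 < eta -> 0 < p -> p < 1 ->
  (forall x : 'cV[R]_n, K *m x = 0 -> Dh *m x = 0 -> Dv *m x = 0 -> x = 0) ->
  0 <= delta ->
  Xset n xGT -> norm2 e <= delta -> y_delta = K *m xGT + e ->
  (forall k, reconstructor (Psi k)) -> reconstructor PsiS ->
  (forall eps : R, 0 < eps -> exists N : nat, forall k : nat, (N <= k)%N ->
     forall y, Ydelta K delta y -> norm1 (Psi k y - PsiS y) <= eps) ->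
  (forall k, unique_minimizer_on (Jfun K Dh Dv lam eta p (Psi k) y_delta) (xk k)) ->
  unique_minimizer_on (Jfun K Dh Dv lam eta p PsiS y_delta) xS ->
  exists phi : nat -> nat, (forall k, (phi k < phi k.+1)%N) /\
    ((fun k => xk (phi k)) @ \oo --> xS).
Proof.
move=> _ lam0 eta0 _ _ Hinj _ XGT He Hy _ _ Hunif Hxk HxS.
set yd := y_delta.
have Yd : Ydelta K delta yd.
  rewrite /Ydelta /=.
  apply: le_trans He.
  have -> : norm2 e = norm2 (K *m xGT - yd) by rewrite /yd Hy opprD addrA subrr add0r norm2N.
  have hl : has_lbound [set norm2 (K *m x - yd) | x in Xset n].
    exists 0 => _ [x _ <-]; exact: sqrtr_ge0.
  by apply: (ge_inf hl); exists xGT.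
have ucv : cvgc (fun k => Psi k yd) (PsiS yd).
  move=> i; apply/cvgrPdist_le => eps eps0.
  have [N HN] := Hunif eps eps0.
  exists N => // k /= Nk.
  apply: le_trans (HN k Nk yd Yd).
  apply: le_trans (norm1_ge _ i); by rewrite distrC !mxE.
pose ws k := weight Dh Dv eta p (Psi k yd).
pose wS := weight Dh Dv eta p (PsiS yd).
have wcv : cvgc ws wS by exact: cvgc_weight.
have wS0 : forall i, 0 < wS i 0 by move=> i; exact: weight_gt0.
have [N _ HN] : \forall k \near \oo, forall i, wS i 0 / 2 <= ws k i 0.
  apply: filter_forall => i.
  have h2 : 0 < wS i 0 / 2 by rewrite divr_gt0.
  have := wcv i; move/cvgrPdist_le => /(_ _ h2).
  apply: filterS => k /= h.
  exact: half_le.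
have XS0 : forall k, Xset n (xk k) := fun k => (Hxk k).1.1.
set Y := norm2 yd ^+ 2.
have Y0 : 0 <= Y by exact: sqr_ge0.
have A0 : absD Dh Dv 0 = 0.
  rewrite /absD !mulmx0; apply/matrixP => i j; rewrite !mxE expr0n /= addr0 sqrtr0.
  done.
have J0 : forall k, Jfun K Dh Dv lam eta p (Psi k) yd 0 = Y.
  move=> k; rewrite /Jfun mulmx0 sub0r norm2N A0.
  have -> : norm1 (\col_i (weight Dh Dv eta p (Psi k yd) i 0 * (0 : 'cV[R]_n) i 0)) = 0.
    by rewrite /norm1 big1 // => i _; rewrite !mxE mulr0 normr0.
  by rewrite mulr0 addr0.
have X0 : Xset n (0 : 'cV[R]_n) by rewrite /Xset => i /=; rewrite mxE.
have Jle : forall k, Jfun K Dh Dv lam eta p (Psi k) yd (xk k) <= Y.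
  by move=> k; rewrite -(J0 k); apply: (Hxk k).1.2.
have bndK : forall k i, `|(K *m xk k) i 0| <= 2 + 2 * Y.
  move=> k i; have h := Jle k; rewrite /Jfun in h.
  have hn := norm1_ge0 (\col_i (weight Dh Dv eta p (Psi k yd) i 0 * absD Dh Dv (xk k) i 0)).
  have h1 : norm2 (K *m xk k - yd) ^+ 2 <= Y.
    exact: le_addr_ge0 h (mulr_ge0 (ltW lam0) hn).
  have h2 := le_trans (sq_le_norm2 _ i) h1.
  have h3 : yd i 0 ^+ 2 <= Y := sq_le_norm2 yd i.
  have E : forall z : 'cV[R]_m, (z - yd) i 0 = z i 0 - yd i 0 by move=> z; rewrite !mxE.
  rewrite -[(K *m xk k) i 0](subrK (yd i 0)) -E.
  apply: le_trans (ler_normD _ _) _.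
  by apply: bnd_sum => //; exact: abs_le_sq.
pose Ad := \sum_j 2 * Y / (lam * wS j 0).
have Ad0 : 0 <= Ad.
  apply: sumr_ge0 => j _; apply: divr_ge0; first exact: twoY_ge0.
  exact: ltW (mulr_gt0 lam0 (wS0 j)).
have bndD : forall k, (N <= k)%N -> forall i, absD Dh Dv (xk k) i 0 <= Ad.
  move=> k Nk i; have h := Jle k; rewrite /Jfun in h.
  set c := (\col_i (weight Dh Dv eta p (Psi k yd) i 0 * absD Dh Dv (xk k) i 0)) in h.
  have hc := norm1_ge c i.
  have a0 : 0 <= absD Dh Dv (xk k) i 0 by rewrite mxE sqrtr_ge0.
  have w1 := HN k Nk i.
  have hci : c i 0 = ws k i 0 * absD Dh Dv (xk k) i 0 by rewrite mxE.
  rewrite hci ger0_norm in hc; last first.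
    apply: mulr_ge0 => //; exact: ltW (weight_gt0 _ _ _ _ _ eta0).
  have h1 : norm2 (K *m xk k - yd) ^+ 2 >= 0 by exact: sqr_ge0.
  have W0 := wS0 i.
  have key : absD Dh Dv (xk k) i 0 <= 2 * Y / (lam * wS i 0).
    exact: (key_bnd lam0 W0 a0 w1 hc h h1).
  apply: le_trans key _.
  rewrite /Ad (bigD1 i) //= lerDl; apply: sumr_ge0 => j _; apply: divr_ge0; first exact: twoY_ge0.
  exact: ltW (mulr_gt0 lam0 (wS0 j)).
pose M1 := 2 + 2 * Y + Ad.
have M10 : 0 <= M1 by exact: M1_ge0.
have [C [C0 HC]] := coerc Hinj.
have bx : forall k i, `|xk (k + N) i 0| <= C * M1.
  move=> k; apply: HC => // i.
  - exact: M1_ge1 (bndK _ i) Ad0.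
  - exact: M1_ge2 (abs_le_absD Dh Dv (xk (k + N)) i).1 (bndD (k + N) (leq_addl _ _) i) Y0.
  - exact: M1_ge2 (abs_le_absD Dh Dv (xk (k + N)) i).2 (bndD (k + N) (leq_addl _ _) i) Y0.
have [phi [Hphi [v Hv]]] := bw_vec bx.
have psiI : forall k, (phi k + N < phi k.+1 + N)%N by move=> k; rewrite ltn_add2r.
have Xv : Xset n v.
  rewrite /Xset => i /=.
  apply: (ler_cvg_to (cvg_cst 0) (Hv i)); apply: nearW => k; exact: XS0.
have wsub : cvgc (fun k => ws (phi k + N)) wS := cvgc_sub psiI wcv.
have minv : forall z, Xset n z ->
    Jfun K Dh Dv lam eta p PsiS yd v <= Jfun K Dh Dv lam eta p PsiS yd z.
  move=> z Xz.
  have cz : cvgc (fun _ : nat => z) z by move=> i; exact: cvg_cst.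
  change (Jw K Dh Dv lam yd wS v <= Jw K Dh Dv lam yd wS z).
  have := ler_cvg_to (cvg_Jw (K:=K) (Dh:=Dh) (Dv:=Dv) (lam:=lam) (y:=yd) wsub Hv) (cvg_Jw (K:=K) (Dh:=Dh) (Dv:=Dv) (lam:=lam) (y:=yd) wsub cz).
  apply; apply: nearW => k; exact: (Hxk (phi k + N)).1.2 z Xz.
have vS : v = xS by apply: HxS.2; split.
exists (fun k => phi k + N); split => //.
rewrite -vS; exact: cvgc_cvg Hv.
Qed.
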